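(* Let $\mu$ be a Borel probability measure on $\mathbb{R}$ with $m_1(\mu)=0$, $m_2(\mu)=1$ and $m_4(\mu)<\infty$. Then $$L(\mu,\mathbf{b})\le \frac72\sqrt[3]{m_4(\mu)-1}.$$
   Context: $m_k(\mu)=\int x^k\,d\mu(x)$. $\mathbf{b}=\frac12\delta_{-1}+\frac12\delta_1$. The Lévy distance between probability measures with distribution functions $F,G$ is $L=\inf\{\epsilon>0: F(x-\epsilon)-\epsilon\le G(x)\le F(x+\epsilon)+\epsilon\ \forall x\in\mathbb{R}\}$. *)

(* Defs.v *)
From Stdlib Require Import Reals Lra.
Open Scope R_scope.

Inductive borel : (R -> Prop) -> Prop :=
| borel_open (U : R -> Prop) : open_set U -> borel U
| borel_compl (A : R -> Prop) : borel A -> borel (fun x => ~ A x)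
| borel_union (A : nat -> R -> Prop) :
    (forall n, borel (A n)) -> borel (fun x => exists n, A n x).

(* Borel probability measure (values on non-Borel sets are irrelevant). *)
Definition is_prob_measure (mu : (R -> Prop) -> R) : Prop :=
  (forall A, borel A -> 0 <= mu A) /\
  mu (fun _ => True) = 1 /\
  (forall A : nat -> R -> Prop,
     (forall n, borel (A n)) ->
     (forall n m x, n <> m -> A n x -> A m x -> False) ->
     infinite_sum (fun n => mu (A n)) (mu (fun x => exists n, A n x))).

Definition lower_sums (mu : (R -> Prop) -> R) (f : R -> R) (v : R) : Prop :=
  exists (n : nat) (a : nat -> R) (A : nat -> R -> Prop),
    (forall i, (i <= n)%nat -> borel (A i)) /\
    (forall i j x, (i <= n)%nat -> (j <= n)%nat -> i <> j -> A i x -> A j x -> False) /\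
    (forall i, (i <= n)%nat -> 0 <= a i) /\
    (forall i x, (i <= n)%nat -> A i x -> a i <= f x) /\
    v = sum_f_R0 (fun i => a i * mu (A i)) n.

(* Lebesgue integral of a nonnegative function, when finite:
   the supremum of the lower sums. *)
Definition nonneg_integral (mu : (R -> Prop) -> R) (f : R -> R) (v : R) : Prop :=
  is_lub (lower_sums mu f) v.

Definition has_moment (mu : (R -> Prop) -> R) (k : nat) (m : R) : Prop :=
  exists p q,
    nonneg_integral mu (fun x => Rmax (x ^ k) 0) p /\
    nonneg_integral mu (fun x => Rmax (- (x ^ k)) 0) q /\
    m = p - q.

Definition cdf (mu : (R -> Prop) -> R) (x : R) : R := mu (fun y => y <= x).

(* Distribution function of b = (delta_{-1} + delta_1)/2. *)
Definition bern_cdf (x : R) : R :=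
  if Rlt_dec x (-1) then 0 else if Rlt_dec x 1 then 1/2 else 1.

Definition levy_ok (F G : R -> R) (eps : R) : Prop :=
  eps > 0 /\ forall x, F (x - eps) - eps <= G x /\ G x <= F (x + eps) + eps.

Definition levy_dist (F G : R -> R) (L : R) : Prop :=
  (forall e, levy_ok F G e -> L <= e) /\
  (forall l, (forall e, levy_ok F G e -> l <= e) -> l <= L).

(* Main.v *)
Require Import Defs.
From Stdlib Require Import Reals Lra Psatz List.
From Stdlib Require Import FunctionalExtensionality PropExtensionality ClassicalDescription Classical.
Open Scope R_scope.

Lemma set_ext (A B : R -> Prop) : (forall x, A x <-> B x) -> A = B.
Proof. intro H. apply functional_extensionality; intro x; apply propositional_extensionality; auto. Qed.

Lemma borel_ext A B : borel A -> (forall x, A x <-> B x) -> borel B.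
Proof. intros HA H. rewrite <- (set_ext A B H). exact HA. Qed.

Lemma mu_ext (mu : (R -> Prop) -> R) A B : (forall x, A x <-> B x) -> mu A = mu B.
Proof. intro H. rewrite (set_ext A B H). reflexivity. Qed.

Lemma borel_empty : borel (fun _ => False).
Proof. apply borel_open. intros x []. Qed.

Lemma borel_True : borel (fun _ => True).
Proof. apply borel_open. intros x _. exists (mkposreal 1 Rlt_0_1). intros y _. trivial. Qed.

Lemma borel_gt a : borel (fun y => a < y).
Proof. apply borel_open. intros x Hx. exists (mkposreal (x - a) ltac:(lra)).
  intros y Hy. unfold disc in Hy. simpl in Hy. apply Rabs_def2 in Hy. lra. Qed.

Lemma borel_lt a : borel (fun y => y < a).
Proof. apply borel_open. intros x Hx. exists (mkposreal (a - x) ltac:(lra)).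
  intros y Hy. unfold disc in Hy. simpl in Hy. apply Rabs_def2 in Hy. lra. Qed.

Lemma borel_not A : borel A -> borel (fun x => ~ A x).
Proof. apply borel_compl. Qed.

Definition seq2 (A B : R -> Prop) (n : nat) : R -> Prop :=
  match n with 0%nat => A | 1%nat => B | _ => fun _ => False end.

Lemma borel_or A B : borel A -> borel B -> borel (fun x => A x \/ B x).
Proof. intros HA HB. apply borel_ext with (fun x => exists n, seq2 A B n x).
 - apply borel_union. intros [|[|n]]; simpl; auto using borel_empty.
 - intro x; split.
   + intros [[|[|n]] H]; simpl in H; tauto.
   + intros [H|H]; [exists 0%nat|exists 1%nat]; exact H. Qed.

Lemma borel_and A B : borel A -> borel B -> borel (fun x => A x /\ B x).
Proof. intros HA HB. apply borel_ext with (fun x => ~ (~ A x \/ ~ B x)).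
 - apply borel_not, borel_or; apply borel_not; auto.
 - intro x; split; [intro H; split; apply NNPP; tauto | tauto]. Qed.

Lemma borel_le a : borel (fun y => y <= a).
Proof. apply borel_ext with (fun y => ~ (a < y)). apply borel_not, borel_gt.
  intro y; split; intro; lra. Qed.

Lemma borel_ge a : borel (fun y => a <= y).
Proof. apply borel_ext with (fun y => ~ (y < a)). apply borel_not, borel_lt.
  intro y; split; intro; lra. Qed.

Lemma mu_empty mu : is_prob_measure mu -> mu (fun _ => False) = 0.
Proof.
  intros [H0 [H1 H2]].
  pose proof (H2 (fun _ => fun _ => False) (fun _ => borel_empty) (fun n m x _ h _ => h)) as HS.
  cbv beta in HS. rewrite (mu_ext mu (fun x : R => exists _ : nat, False) (fun _ => False)) in HS
    by (intro; split; [intros [_ []]| tauto]).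
  set (c := mu (fun _ => False)) in *.
  destruct (Req_dec c 0) as [|Hc]; auto. exfalso.
  assert (0 < Rabs c) by (apply Rabs_pos_lt; auto).
  destruct (HS (Rabs c / 2)) as [N HN]; [lra|].
  pose proof (HN N ltac:(lia)) as A1. pose proof (HN (S N) ltac:(lia)) as A2.
  rewrite tech5 in A2. unfold R_dist in *.
  apply Rabs_def2 in A1. apply Rabs_def2 in A2.
  destruct (Rle_or_lt 0 c); [rewrite Rabs_pos_eq in *|rewrite Rabs_left in *]; lra.
Qed.

Lemma mu_or mu A B : is_prob_measure mu -> borel A -> borel B ->
  (forall x, A x -> B x -> False) -> mu (fun x => A x \/ B x) = mu A + mu B.
Proof.
  intros Hm HA HB Hd. pose proof (mu_empty mu Hm) as He. destruct Hm as [_ [_ H2]].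
  assert (Hb: forall n, borel (seq2 A B n)) by (intros [|[|n]]; simpl; auto using borel_empty).
  assert (Hdj: forall n m x, n <> m -> seq2 A B n x -> seq2 A B m x -> False).
  { intros [|[|n]] [|[|m]] x Hnm Ha Hb'; simpl in *; try contradiction;
      try (apply Hnm; reflexivity); eauto. }
  pose proof (H2 _ Hb Hdj) as HS.
  rewrite (mu_ext mu (fun x => exists n, seq2 A B n x) (fun x => A x \/ B x)) in HS.
  2:{ intro x; split.
   + intros [[|[|n]] H]; simpl in H; tauto.
   + intros [H|H]; [exists 0%nat|exists 1%nat]; exact H. }
  apply (uniqueness_sum _ _ _ HS).
  assert (Hs: forall n, (n >= 1)%nat -> sum_f_R0 (fun n => mu (seq2 A B n)) n = mu A + mu B).
  { induction n as [|n IH]; intro Hn; [lia|]. destruct n as [|n].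
    - simpl. reflexivity.
    - rewrite tech5, IH by lia. simpl. rewrite He. ring. }
  intros eps Heps. exists 1%nat. intros n Hn. rewrite Hs by exact Hn.
  unfold R_dist. rewrite Rminus_diag, Rabs_R0. exact Heps.
Qed.

Lemma mu_nonneg mu A : is_prob_measure mu -> borel A -> 0 <= mu A.
Proof. intros [H _] HA. auto. Qed.

Lemma mu_split mu A E : is_prob_measure mu -> borel A -> borel E ->
  mu A = mu (fun x => A x /\ E x) + mu (fun x => A x /\ ~ E x).
Proof. intros Hm HA HE. rewrite <- mu_or; auto using borel_and, borel_not.
  - apply mu_ext. intro x; split; [intro; destruct (classic (E x)); tauto| tauto].
  - intros x; tauto. Qed.

Lemma mu_mono mu A B : is_prob_measure mu -> borel A -> borel B ->
  (forall x, A x -> B x) -> mu A <= mu B.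
Proof. intros Hm HA HB H. rewrite (mu_split mu B A Hm HB HA).
  rewrite (mu_ext mu (fun x => B x /\ A x) A) by (intro x; split; [tauto| intro; split; auto]).
  pose proof (mu_nonneg mu (fun x => B x /\ ~ A x) Hm (borel_and _ _ HB (borel_not _ HA))). lra. Qed.

Lemma mu_True mu : is_prob_measure mu -> mu (fun _ => True) = 1.
Proof. intros [_ [H _]]. exact H. Qed.

Lemma mu_le1 mu A : is_prob_measure mu -> borel A -> mu A <= 1.
Proof. intros Hm HA. rewrite <- (mu_True mu Hm). apply mu_mono; auto using borel_True. Qed.

Lemma mu_compl mu A : is_prob_measure mu -> borel A -> mu (fun x => ~ A x) = 1 - mu A.
Proof. intros Hm HA. rewrite <- (mu_True mu Hm).
  rewrite (mu_split mu (fun _ => True) A Hm borel_True HA).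
  rewrite (mu_ext mu (fun x => True /\ A x) A) by (intro; tauto).
  rewrite (mu_ext mu (fun x => True /\ ~ A x) (fun x => ~ A x)) by (intro; tauto). ring. Qed.
Definition ind (A : R -> Prop) (x : R) : R :=
  if excluded_middle_informative (A x) then 1 else 0.

Lemma ind_T A x : A x -> ind A x = 1.
Proof. unfold ind; destruct excluded_middle_informative; tauto. Qed.
Lemma ind_F A x : ~ A x -> ind A x = 0.
Proof. unfold ind; destruct excluded_middle_informative; tauto. Qed.
Lemma ind_01 A x : (A x /\ ind A x = 1) \/ (~ A x /\ ind A x = 0).
Proof. unfold ind; destruct excluded_middle_informative; tauto. Qed.
Lemma ind_ge0 A x : 0 <= ind A x.
Proof. unfold ind; destruct excluded_middle_informative; lra. Qed.

Definition fam := list (R * (R -> Prop)).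

Fixpoint fsum (mu : (R -> Prop) -> R) (L : fam) : R :=
  match L with nil => 0 | p :: L' => fst p * mu (snd p) + fsum mu L' end.
Fixpoint fval (L : fam) (x : R) : R :=
  match L with nil => 0 | p :: L' => fst p * ind (snd p) x + fval L' x end.
Fixpoint fcnt (L : fam) (x : R) : R :=
  match L with nil => 0 | p :: L' => ind (snd p) x + fcnt L' x end.
Definition fborel (L : fam) := forall p, In p L -> borel (snd p).
Definition fpart (L : fam) := fborel L /\ forall x, fcnt L x = 1.

Lemma fcnt_ge0 L x : 0 <= fcnt L x.
Proof. induction L; simpl; [lra|]. pose proof (ind_ge0 (snd a) x); lra. Qed.

Lemma fcnt_In L p x : In p L -> snd p x -> 1 <= fcnt L x.
Proof. induction L as [|q L IH]; simpl; [tauto|]. intros [->|H] Hx.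
  - rewrite ind_T by exact Hx. pose proof (fcnt_ge0 L x); lra.
  - pose proof (ind_ge0 (snd q) x). specialize (IH H Hx). lra. Qed.

Lemma fcnt_zero L x : fcnt L x <= 0 -> fval L x = 0.
Proof. induction L as [|q L IH]; simpl; [auto|]. intro H.
  pose proof (ind_ge0 (snd q) x). pose proof (fcnt_ge0 L x).
  assert (ind (snd q) x = 0) as E by lra. rewrite E, IH by lra. ring. Qed.

Lemma fval_In L p x : fcnt L x <= 1 -> In p L -> snd p x -> fval L x = fst p.
Proof. induction L as [|q L IH]; simpl; [tauto|]. intros Hc [->|H] Hx.
  - rewrite ind_T in * by exact Hx. rewrite fcnt_zero by lra. ring.
  - pose proof (fcnt_In L p x H Hx). pose proof (ind_ge0 (snd q) x).
    assert (ind (snd q) x = 0) as E by lra. rewrite E in *. rewrite IH; auto. ring. lra. Qed.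

Lemma fcnt_ex L x : 0 < fcnt L x -> exists p, In p L /\ snd p x.
Proof. induction L as [|q L IH]; simpl; [lra|]. intro H.
  destruct (ind_01 (snd q) x) as [[Hq _]|[_ E]].
  - exists q; auto.
  - rewrite E in H. destruct IH as [p [Hp Hx]]; [lra|]. exists p; auto. Qed.

Lemma borel_Ex L : fborel L -> borel (fun x => exists p, In p L /\ snd p x).
Proof. induction L as [|q L IH]; intro Hb.
  - apply borel_ext with (fun _ => False). apply borel_empty. intro x; simpl; split; [tauto|]. intros [p [[] _]].
  - apply borel_ext with (fun x => snd q x \/ exists p, In p L /\ snd p x).
    + apply borel_or. apply Hb; simpl; auto. apply IH. intros p Hp; apply Hb; simpl; auto.
    + intro x; simpl; split.
      * intros [H|[p [Hp H]]]; [exists q|exists p]; auto.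
      * intros [p [[<-|Hp] H]]; [left; auto| right; exists p; auto]. Qed.

Fixpoint msum_and (mu : (R -> Prop) -> R) (A : R -> Prop) (L : fam) : R :=
  match L with nil => 0 | p :: L' => mu (fun x => snd p x /\ A x) + msum_and mu A L' end.

Lemma msum_union mu A L : is_prob_measure mu -> fborel L -> borel A -> (forall x, fcnt L x <= 1) ->
  msum_and mu A L = mu (fun x => A x /\ exists p, In p L /\ snd p x).
Proof. intros Hm. induction L as [|q L IH]; intros Hb HA Hc; simpl.
  - rewrite (mu_ext mu _ (fun _ => False)). rewrite mu_empty; auto. intro; split; [intros [_ [p [[] _]]]| tauto].
  - assert (HbL : fborel L) by (intros p Hp; apply Hb; simpl; auto).
    assert (Hq : borel (snd q)) by (apply Hb; simpl; auto).
    rewrite IH; auto.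
    2:{ intro x. specialize (Hc x). simpl in Hc. pose proof (ind_ge0 (snd q) x). lra. }
    rewrite <- mu_or; auto using borel_and, borel_Ex.
    + apply mu_ext. intro x; split.
      * intros [[H1 H2]|[H1 [p [Hp H2]]]]; split; auto; [exists q|exists p]; simpl; auto.
      * intros [H1 [p [[<-|Hp] H2]]]; [left; auto|right; split; auto; exists p; auto].
    + intros x [H1 _] [_ [p [Hp H2]]]. specialize (Hc x). simpl in Hc.
      rewrite ind_T in Hc by exact H1. pose proof (fcnt_In L p x Hp H2). lra. Qed.

Lemma msum_part mu A D : is_prob_measure mu -> fpart D -> borel A -> msum_and mu A D = mu A.
Proof. intros Hm [Hb Hc] HA. rewrite msum_union; auto.
  - apply mu_ext. intro x; split; [tauto|]. intro H; split; auto. apply fcnt_ex. rewrite Hc; lra.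
  - intro x; rewrite Hc; lra. Qed.

Definition refine (a : R) (A : R -> Prop) (D : fam) : fam :=
  flat_map (fun p => (fst p + a, fun x => snd p x /\ A x) :: (fst p, fun x => snd p x /\ ~ A x) :: nil) D.

Lemma ind_and P A x : ind (fun y => P y /\ A y) x = ind P x * ind A x.
Proof. destruct (ind_01 P x) as [[H1 E1]|[H1 E1]]; destruct (ind_01 A x) as [[H2 E2]|[H2 E2]];
  rewrite E1, E2; [rewrite ind_T|rewrite ind_F|rewrite ind_F|rewrite ind_F]; try tauto; ring. Qed.
Lemma ind_andn P A x : ind (fun y => P y /\ ~ A y) x = ind P x * (1 - ind A x).
Proof. destruct (ind_01 P x) as [[H1 E1]|[H1 E1]]; destruct (ind_01 A x) as [[H2 E2]|[H2 E2]];
  rewrite E1, E2; [rewrite ind_F|rewrite ind_T|rewrite ind_F|rewrite ind_F]; try tauto; ring. Qed.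

Lemma refine_cnt a A D x : fcnt (refine a A D) x = fcnt D x.
Proof. induction D as [|p D IH]; simpl; auto. rewrite IH, ind_and, ind_andn. ring. Qed.

Lemma refine_val a A D x : fval (refine a A D) x = fval D x + a * ind A x * fcnt D x.
Proof. induction D as [|p D IH]; simpl; [ring|]. rewrite IH, ind_and, ind_andn. ring. Qed.

Lemma refine_borel a A D : borel A -> fborel D -> fborel (refine a A D).
Proof. intros HA HD. induction D as [|p D IH]; simpl; [intros q []|].
  intros q [<-|[<-|Hq]]; simpl.
  - apply borel_and; auto. apply HD; simpl; auto.
  - apply borel_and; [apply HD; simpl; auto| apply borel_not; auto].
  - apply IH; auto. intros r Hr; apply HD; simpl; auto. Qed.

Lemma refine_sum mu a A D : is_prob_measure mu -> borel A -> fborel D ->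
  fsum mu (refine a A D) = fsum mu D + a * msum_and mu A D.
Proof. intros Hm HA HD. induction D as [|p D IH]; simpl; [ring|].
  rewrite IH by (intros r Hr; apply HD; simpl; auto).
  rewrite (mu_split mu (snd p) A Hm) by (auto; apply HD; simpl; auto). ring. Qed.

Lemma part_exists mu L : is_prob_measure mu -> fborel L ->
  exists D, fpart D /\ (forall x, fval D x = fval L x) /\ fsum mu D = fsum mu L.
Proof. intro Hm. induction L as [|q L IH]; intro Hb.
  - exists ((0, fun _ => True) :: nil). split; [split|split].
    + intros p [<-|[]]; apply borel_True.
    + intro x; simpl; rewrite ind_T; auto; ring.
    + intro x; simpl; ring.
    + simpl; ring.
  - destruct IH as [D [HD [Hv Hs]]]. intros p Hp; apply Hb; simpl; auto.
    assert (Hq : borel (snd q)) by (apply Hb; simpl; auto).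
    exists (refine (fst q) (snd q) D). split; [split|split].
    + apply refine_borel; auto. apply HD.
    + intro x. rewrite refine_cnt. apply HD.
    + intro x. rewrite refine_val, Hv. destruct HD as [_ Hc]. rewrite Hc. simpl. ring.
    + rewrite refine_sum, msum_part, Hs; auto. simpl; ring. apply HD. Qed.
Fixpoint lsum (h : R * (R -> Prop) -> R) (L : fam) : R :=
  match L with nil => 0 | p :: L' => h p + lsum h L' end.

Lemma sum_nth h D d : sum_f_R0 (fun i => h (nth i D d)) (length D) = lsum h D + h d.
Proof. induction D as [|p D IH]; [simpl; ring|].
  cbn [length]. rewrite decomp_sum by lia. cbn [nth Nat.pred]. rewrite IH. simpl. ring. Qed.

Definition dflt : R * (R -> Prop) := (0, fun _ => False).

Lemma nth_disj D : (forall x, fcnt D x <= 1) -> forall i j x, i <> j ->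
  snd (nth i D dflt) x -> snd (nth j D dflt) x -> False.
Proof. induction D as [|q D IH]; intros Hc i j x Hij Hi Hj.
  - destruct i, j; simpl in *; auto.
  - assert (Hc' : forall x, fcnt D x <= 1).
    { intro y; specialize (Hc y); simpl in Hc; pose proof (ind_ge0 (snd q) y); lra. }
    destruct i as [|i], j as [|j]; simpl in Hi, Hj.
    + lia.
    + destruct (nth_in_or_default j D dflt) as [Hin|Hd]; [|rewrite Hd in Hj; simpl in Hj; auto].
      pose proof (fcnt_In D _ x Hin Hj). specialize (Hc x). simpl in Hc. rewrite ind_T in Hc by auto. lra.
    + destruct (nth_in_or_default i D dflt) as [Hin|Hd]; [|rewrite Hd in Hi; simpl in Hi; auto].
      pose proof (fcnt_In D _ x Hin Hi). specialize (Hc x). simpl in Hc. rewrite ind_T in Hc by auto. lra.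
    + apply (IH Hc' i j x); auto. Qed.

Lemma lsum_le h1 h2 L : (forall p, In p L -> h1 p <= h2 p) -> lsum h1 L <= lsum h2 L.
Proof. induction L as [|p L IH]; simpl; intro H; [lra|].
  pose proof (H p (or_introl eq_refl)). pose proof (IH (fun q Hq => H q (or_intror Hq))). lra. Qed.

Lemma fsum_lsum mu L : fsum mu L = lsum (fun p => fst p * mu (snd p)) L.
Proof. induction L; simpl; congruence. Qed.

Lemma part_bound mu g v D : is_prob_measure mu -> nonneg_integral mu g v -> (forall x, 0 <= g x) ->
  fpart D -> (forall x, fval D x <= g x) -> fsum mu D <= v.
Proof. intros Hm [Hub _] Hg [Hb Hc] Hv.
  set (a := fun i => Rmax (fst (nth i D dflt)) 0).
  set (A := fun i => snd (nth i D dflt)).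
  assert (HL : lower_sums mu g (sum_f_R0 (fun i => a i * mu (A i)) (length D))).
  { exists (length D), a, A. split; [|split; [|split; [|split]]].
    - intros i _. unfold A. destruct (nth_in_or_default i D dflt) as [Hin|Hd].
      + apply Hb; auto.
      + rewrite Hd; apply borel_empty.
    - intros i j x _ _ Hij Hi Hj. apply (nth_disj D) with i j x; auto. intro y; rewrite Hc; lra.
    - intros i _. apply Rmax_r.
    - intros i x _ Hx. unfold a. unfold A in Hx.
      destruct (nth_in_or_default i D dflt) as [Hin|Hd]; [|rewrite Hd in Hx; simpl in Hx; tauto].
      rewrite <- (fval_In D _ x) by (auto; rewrite Hc; lra).
      apply Rmax_lub; auto.
    - reflexivity. }
  pose proof (Hub _ HL) as H1. unfold a, A in H1.
  rewrite (sum_nth (fun p => Rmax (fst p) 0 * mu (snd p)) D dflt) in H1.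
  simpl in H1. rewrite Rmax_left in H1 by lra.
  rewrite fsum_lsum. eapply Rle_trans; [|apply H1].
  assert (lsum (fun p => fst p * mu (snd p)) D <= lsum (fun p => Rmax (fst p) 0 * mu (snd p)) D).
  { apply lsum_le. intros p Hp. apply Rmult_le_compat_r. apply mu_nonneg; auto. apply Rmax_l. }
  lra. Qed.

Lemma fam_bound mu g v L : is_prob_measure mu -> nonneg_integral mu g v -> (forall x, 0 <= g x) ->
  fborel L -> (forall x, fval L x <= g x) -> fsum mu L <= v.
Proof. intros Hm Hi Hg Hb Hv. destruct (part_exists mu L Hm Hb) as [D [HD [E1 E2]]].
  rewrite <- E2. apply (part_bound mu g v D); auto. intro x; rewrite E1; auto. Qed.

Fixpoint famn (a : nat -> R) (A : nat -> R -> Prop) (n : nat) : fam :=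
  match n with O => (a O, A O) :: nil | S m => (a (S m), A (S m)) :: famn a A m end.

Lemma famn_sum mu a A n : fsum mu (famn a A n) = sum_f_R0 (fun i => a i * mu (A i)) n.
Proof. induction n; simpl; [ring|]. rewrite IHn. ring. Qed.
Lemma famn_borel a A n : (forall i, (i <= n)%nat -> borel (A i)) -> fborel (famn a A n).
Proof. induction n as [|n IH]; intros Hb p Hp; simpl in Hp.
  - destruct Hp as [<-|[]]. apply Hb; lia.
  - destruct Hp as [<-|Hp]. apply Hb; lia. apply IH; auto. Qed.

Lemma famn_val a A n x : fval (famn a A n) x = sum_f_R0 (fun i => a i * ind (A i) x) n.
Proof. induction n; simpl; [ring|]. rewrite IHn. ring. Qed.

Lemma sum_zero h n : (forall i, (i <= n)%nat -> h i = 0) -> sum_f_R0 h n = 0.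
Proof. induction n; intro H; simpl; [apply H; lia|]. rewrite IHn. rewrite H by lia. ring. intros; apply H; lia. Qed.

Lemma famn_le f a A n x : 0 <= f x ->
  (forall i j x, (i <= n)%nat -> (j <= n)%nat -> i <> j -> A i x -> A j x -> False) ->
  (forall i x, (i <= n)%nat -> A i x -> a i <= f x) ->
  sum_f_R0 (fun i => a i * ind (A i) x) n <= f x.
Proof. intros Hf. induction n as [|n IH]; intros Hd Ha; simpl.
  - destruct (ind_01 (A 0%nat) x) as [[H E]|[H E]]; rewrite E; [rewrite Rmult_1_r; apply Ha; auto|lra].
  - destruct (ind_01 (A (S n)) x) as [[H E]|[H E]]; rewrite E.
    + rewrite sum_zero. rewrite Rmult_1_r, Rplus_0_l. apply Ha; auto.
      intros i Hi. rewrite ind_F. ring. intro Hi'. apply (Hd i (S n) x); auto; lia.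
    + rewrite Rmult_0_r, Rplus_0_r. apply IH.
      intros i j y Hi Hj; apply Hd; lia. intros i y Hi; apply Ha; lia. Qed.

Lemma approx mu f v : nonneg_integral mu f v -> (forall x, 0 <= f x) ->
  forall d, 0 < d -> exists L, fborel L /\ (forall x, fval L x <= f x) /\ v - d < fsum mu L.
Proof. intros [Hub Hl] Hf d Hd. apply NNPP. intro Hn.
  assert (is_upper_bound (lower_sums mu f) (v - d)).
  { intros w [n [a [A [Hb [Hdj [Ha0 [Ha Hw]]]]]]]. apply Rnot_lt_le. intro Hlt. apply Hn.
    exists (famn a A n). split; [|split].
    - apply famn_borel; auto.
    - intro x. rewrite famn_val. apply famn_le; auto.
    - rewrite famn_sum, <- Hw. exact Hlt. }
  pose proof (Hl _ H). lra.
Qed.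
Definition scale (c : R) (L : fam) : fam := map (fun p => (c * fst p, snd p)) L.

Lemma fval_app L1 L2 x : fval (L1 ++ L2) x = fval L1 x + fval L2 x.
Proof. induction L1; simpl; [ring|]. rewrite IHL1; ring. Qed.
Lemma fsum_app mu L1 L2 : fsum mu (L1 ++ L2) = fsum mu L1 + fsum mu L2.
Proof. induction L1; simpl; [ring|]. rewrite IHL1; ring. Qed.
Lemma fval_scale c L x : fval (scale c L) x = c * fval L x.
Proof. induction L; simpl; [ring|]. rewrite IHL; ring. Qed.
Lemma fsum_scale mu c L : fsum mu (scale c L) = c * fsum mu L.
Proof. induction L; simpl; [ring|]. rewrite IHL; ring. Qed.
Lemma fborel_app L1 L2 : fborel L1 -> fborel L2 -> fborel (L1 ++ L2).
Proof. intros H1 H2 p Hp. apply in_app_or in Hp. destruct Hp; auto. Qed.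
Lemma fborel_scale c L : fborel L -> fborel (scale c L).
Proof. intros H p Hp. unfold scale in Hp. apply in_map_iff in Hp. destruct Hp as [q [<- Hq]]. simpl. apply H; auto. Qed.

Lemma le_eps a b k : 0 <= k -> (forall d, 0 < d -> a <= b + k * d) -> a <= b.
Proof. intros Hk H. apply Rnot_lt_le. intro Hlt.
  set (d := (a - b) / (2 * (k + 1))).
  assert (Hd : 2 * (k + 1) * d = a - b) by (unfold d; field; lra).
  assert (0 < d) by (unfold d; apply Rdiv_lt_0_compat; lra).
  specialize (H d H0). nra. Qed.

Lemma eng mu g v f1 v1 f2 v2 c1 c2 d E c0 :
  is_prob_measure mu -> nonneg_integral mu g v -> (forall x, 0 <= g x) ->
  nonneg_integral mu f1 v1 -> (forall x, 0 <= f1 x) ->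
  nonneg_integral mu f2 v2 -> (forall x, 0 <= f2 x) ->
  0 <= c1 -> 0 <= c2 -> borel E ->
  (forall x, c1 * f1 x + c2 * f2 x + d * ind E x + c0 <= g x) ->
  c1 * v1 + c2 * v2 + d * mu E + c0 <= v.
Proof. intros Hm Hg Hg0 H1 H10 H2 H20 Hc1 Hc2 HE Hpt.
  apply (le_eps _ _ (c1 + c2)); [lra|]. intros dl Hdl.
  destruct (approx mu f1 v1 H1 H10 dl Hdl) as [L1 [Hb1 [Hv1 Hs1]]].
  destruct (approx mu f2 v2 H2 H20 dl Hdl) as [L2 [Hb2 [Hv2 Hs2]]].
  set (F := scale c1 L1 ++ scale c2 L2 ++ (d, E) :: (c0, fun _ => True) :: nil).
  assert (HF : fsum mu F <= v).
  { apply (fam_bound mu g v F); auto.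
    - apply fborel_app; [apply fborel_scale; auto|]. apply fborel_app; [apply fborel_scale; auto|].
      intros p [<-|[<-|[]]]; simpl; auto using borel_True.
    - intro x. unfold F. rewrite !fval_app, !fval_scale. simpl. rewrite (ind_T (fun _ => True)) by auto.
      specialize (Hpt x). specialize (Hv1 x). specialize (Hv2 x).
      assert (c1 * fval L1 x <= c1 * f1 x) by (apply Rmult_le_compat_l; auto).
      assert (c2 * fval L2 x <= c2 * f2 x) by (apply Rmult_le_compat_l; auto). lra. }
  unfold F in HF. rewrite !fsum_app, !fsum_scale in HF. simpl in HF. rewrite mu_True in HF by auto.
  assert (c1 * (v1 - dl) <= c1 * fsum mu L1) by (apply Rmult_le_compat_l; lra).
  assert (c2 * (v2 - dl) <= c2 * fsum mu L2) by (apply Rmult_le_compat_l; lra).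
  lra. Qed.

Lemma int_zero mu f q : is_prob_measure mu -> nonneg_integral mu f q -> (forall x, f x = 0) -> q = 0.
Proof. intros Hm [Hub Hl] Hf. apply Rle_antisym.
  - apply Hl. intros w [n [a [A [Hb [Hdj [Ha0 [Ha Hw]]]]]]]. rewrite Hw. clear Hw.
    assert (Ht : forall i, (i <= n)%nat -> a i * mu (A i) = 0).
    { intros i Hi. destruct (classic (exists x, A i x)) as [[x Hx]|Hn].
      - pose proof (Ha i x Hi Hx). pose proof (Ha0 i Hi). rewrite Hf in *. replace (a i) with 0 by lra. ring.
      - rewrite (mu_ext mu (A i) (fun _ => False)). rewrite mu_empty by auto. ring.
        intro x; split; [intro; apply Hn; exists x; auto|tauto]. }
    rewrite sum_zero; auto; lra.
  - apply Hub. exists 0%nat, (fun _ => 0), (fun _ _ => False). split; [|split; [|split; [|split]]].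
    + intros; apply borel_empty.
    + intros; auto.
    + intros; lra.
    + intros i x _ []. 
    + simpl. rewrite mu_empty; auto; ring. Qed.
Lemma sg_cases sg : sg * sg = 1 -> sg = 1 \/ sg = -1.
Proof. intro H. assert ((sg - 1) * (sg + 1) = 0) by nra.
  apply Rmult_integral in H0. destruct H0; [left|right]; lra. Qed.

Lemma borel_ge_sg a sg : sg * sg = 1 -> borel (fun x => a <= sg * x).
Proof. intro H. destruct (sg_cases sg H) as [->| ->].
  - apply borel_ext with (fun x => a <= x). apply borel_ge. intro; lra.
  - apply borel_ext with (fun x => x <= -a). apply borel_le. intro; lra. Qed.

Lemma borel_le_sg a sg : sg * sg = 1 -> borel (fun x => sg * x <= a).
Proof. intro H. destruct (sg_cases sg H) as [->| ->].
  - apply borel_ext with (fun x => x <= a). apply borel_le. intro; lra.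
  - apply borel_ext with (fun x => -a <= x). apply borel_ge. intro; lra. Qed.

Lemma borel_mid_sg a sg : sg * sg = 1 -> borel (fun x => - a < sg * x /\ sg * x < a).
Proof. intro H. destruct (sg_cases sg H) as [->| ->].
  - apply borel_ext with (fun x => -a < x /\ x < a). apply borel_and; [apply borel_gt|apply borel_lt]. intro; lra.
  - apply borel_ext with (fun x => -a < x /\ x < a). apply borel_and; [apply borel_gt|apply borel_lt]. intro; lra. Qed.

Lemma pow24 x : 0 <= x^2 /\ 0 <= x^4.
Proof. assert (0 <= x^2) by apply pow2_ge_0. split; auto. replace (x^4) with (x^2*x^2) by ring. nra. Qed.

Lemma arith e s Q N Md t : 0 < e < 1 -> 0 <= s -> 343 * s <= 8 * e^3 -> 0 <= Md ->
  e^2 * Md <= s -> N = 1 - Q - Md -> (1 - e) * N <= t -> e^2 * t <= e^2 * Q + e^4/4 + s ->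
  1/2 - e <= Q.
Proof. intros He Hs Hs3 Hmd0 Hmd HN Ht Htu.
  assert (He2 : 0 < e^2) by nra.
  assert (H1 : Md <= 8 * e / 343).
  { apply Rmult_le_reg_l with (e^2); auto. nra. }
  assert (H2 : t <= Q + e^2/4 + 8 * e / 343).
  { apply Rmult_le_reg_l with (e^2); auto. nra. }
  subst N. nra. Qed.

Lemma pt_upper e z i : 0 < e < 1 -> ((1 - e <= z /\ i = 1) \/ (~ (1 - e <= z) /\ i = 0)) ->
  e^2 * Rmax z 0 + 2 * z^2 + (- e^2) * i + (-1 - e^4/4) <= z^4.
Proof. intros He Hi.
  destruct (Rle_or_lt z 0) as [Hz|Hz].
  - rewrite Rmax_right by lra. assert (0 <= i) by (destruct Hi as [[_ ->]|[_ ->]]; lra).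
    assert (0 <= (z^2-1)^2) by apply pow2_ge_0. assert (0 <= e^4) by (apply pow_le; lra).
    assert (0 <= e^2 * i) by (apply Rmult_le_pos; nra). nra.
  - rewrite Rmax_left by lra. destruct Hi as [[Hz1 ->]|[Hz1 ->]].
    + set (y := z - 1). assert (Hy : z = y + 1) by (unfold y; ring). rewrite Hy.
      assert (0 <= (y - e^2/2)^2) by apply pow2_ge_0.
      assert (0 <= y^2 * ((y+2)^2 - 1)). { apply Rmult_le_pos. apply pow2_ge_0. nra. }
      nra.
    + assert (1 - z^2 >= e) by nra. assert ((1 - z^2)^2 >= e^2) by nra. nra. Qed.

Lemma tail_bound mu m4 E d : is_prob_measure mu ->
  nonneg_integral mu (fun x => Rmax (x^4) 0) m4 -> nonneg_integral mu (fun x => Rmax (x^2) 0) 1 ->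
  borel E -> (forall x, E x -> d <= (x^2 - 1)^2) -> d * mu E <= m4 - 1.
Proof. intros Hm I4 I2 HE Hd.
  assert (H := eng mu _ m4 _ 1 _ 1 2 0 d E (-1) Hm I4 (fun x => Rmax_r _ _) I2 (fun x => Rmax_r _ _)
     I2 (fun x => Rmax_r _ _) ltac:(lra) ltac:(lra) HE).
  assert (H' : 2 * 1 + 0 * 1 + d * mu E + -1 <= m4); [|lra].
  apply H. intro x. rewrite (Rmax_left (x^4)), (Rmax_left (x^2)) by (destruct (pow24 x); assumption).
  destruct (ind_01 E x) as [[Hx ->]|[Hx ->]].
  - specialize (Hd x Hx). nra.
  - assert (0 <= (x^2-1)^2) by apply pow2_ge_0. nra. Qed.

Lemma markov mu h t E c : is_prob_measure mu -> nonneg_integral mu h t -> (forall x, 0 <= h x) ->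
  borel E -> (forall x, E x -> c <= h x) -> c * mu E <= t.
Proof. intros Hm Ih Hh HE Hc.
  assert (H := eng mu h t h t h t 0 0 c E 0 Hm Ih Hh Ih Hh Ih Hh ltac:(lra) ltac:(lra) HE).
  assert (H' : 0 * t + 0 * t + c * mu E + 0 <= t); [|lra]. apply H. intro x.
  destruct (ind_01 E x) as [[Hx ->]|[Hx ->]]; [specialize (Hc x Hx)|specialize (Hh x)]; lra. Qed.

Lemma t_upper mu m4 zp t sg e : is_prob_measure mu ->
  nonneg_integral mu (fun x => Rmax (x^4) 0) m4 -> nonneg_integral mu (fun x => Rmax (x^2) 0) 1 ->
  nonneg_integral mu zp t -> (forall x, zp x = Rmax (sg * x) 0) -> sg * sg = 1 -> 0 < e < 1 ->
  e^2 * t <= e^2 * mu (fun x => 1 - e <= sg * x) + e^4/4 + (m4 - 1).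
Proof. intros Hm I4 I2 Iz Hz Hsg He.
  assert (Hz0 : forall x, 0 <= zp x) by (intro x; rewrite Hz; apply Rmax_r).
  assert (H := eng mu _ m4 zp t _ 1 (e^2) 2 (- e^2) (fun x => 1 - e <= sg * x) (-1 - e^4/4) Hm I4
     (fun x => Rmax_r _ _) Iz Hz0 I2 (fun x => Rmax_r _ _) ltac:(nra) ltac:(lra) (borel_ge_sg _ _ Hsg)).
  assert (H' : e^2 * t + 2 * 1 + - e^2 * mu (fun x => 1 - e <= sg * x) + (-1 - e^4/4) <= m4); [|lra].
  apply H. intro x. rewrite Hz. rewrite (Rmax_left (x^4)), (Rmax_left (x^2)) by (destruct (pow24 x); assumption).
  replace (x^2) with ((sg*x)^2) by (replace ((sg*x)^2) with (sg*sg*x^2) by ring; rewrite Hsg; ring).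
  replace (x^4) with ((sg*x)^4) by (replace ((sg*x)^4) with ((sg*sg)*(sg*sg)*x^4) by ring; rewrite Hsg; ring).
  apply pt_upper; auto. destruct (ind_01 (fun x => 1 - e <= sg * x) x) as [[Hx ->]|[Hx ->]]; auto. Qed.
Lemma sq_sg sg x : sg * sg = 1 -> x^2 = (sg*x)^2.
Proof. intro H. replace ((sg*x)^2) with (sg*sg*x^2) by ring. rewrite H; ring. Qed.

Lemma Q_bound mu m4 zp zm t sg e : is_prob_measure mu ->
  nonneg_integral mu (fun x => Rmax (x^4) 0) m4 -> nonneg_integral mu (fun x => Rmax (x^2) 0) 1 ->
  nonneg_integral mu zp t -> nonneg_integral mu zm t ->
  (forall x, zp x = Rmax (sg * x) 0) -> (forall x, zm x = Rmax (- (sg * x)) 0) -> sg * sg = 1 ->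
  0 < e < 1 -> 0 <= m4 - 1 -> 343 * (m4 - 1) <= 8 * e^3 ->
  1/2 - e <= mu (fun x => 1 - e <= sg * x).
Proof. intros Hm I4 I2 Izp Izm Hzp Hzm Hsg He Hs Hs3.
  set (P := fun x => 1 - e <= sg * x).
  set (Ns := fun x => sg * x <= - (1 - e)).
  set (Ms := fun x => - (1 - e) < sg * x /\ sg * x < 1 - e).
  assert (HbP : borel P) by apply borel_ge_sg, Hsg.
  assert (HbN : borel Ns) by apply borel_le_sg, Hsg.
  assert (HbM : borel Ms) by apply borel_mid_sg, Hsg.
  assert (Hmd : e^2 * mu Ms <= m4 - 1).
  { apply tail_bound; auto. intros x [H1 H2]. rewrite (sq_sg sg x Hsg).
    set (z := sg * x) in *. assert (z^2 < (1-e)^2) by nra. assert (1 - z^2 >= e) by nra. nra. }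
  assert (HN : (1 - e) * mu Ns <= t).
  { apply (markov mu zm t Ns (1 - e)); auto. intro x; rewrite Hzm; apply Rmax_r.
    intros x Hx. rewrite Hzm. unfold Ns in Hx. pose proof (Rmax_l (- (sg * x)) 0). lra. }
  assert (HNM : mu Ns = 1 - mu P - mu Ms).
  { assert (E1 := mu_or mu Ns Ms Hm HbN HbM ltac:(intros x H1 [H2 H3]; unfold Ns in H1; lra)).
    rewrite (mu_ext mu (fun x => Ns x \/ Ms x) (fun x => ~ P x)) in E1.
    2:{ intro x; unfold Ns, Ms, P; split; [intros [H|[H H']]; lra|]. intro H. apply Rnot_le_lt in H.
        destruct (Rle_or_lt (sg * x) (- (1 - e))); [left|right]; auto. }
    rewrite mu_compl in E1 by auto. lra. }
  assert (Htu := t_upper mu m4 zp t sg e Hm I4 I2 Izp Hzp Hsg He).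
  apply (arith e (m4 - 1) (mu P) (mu Ns) (mu Ms) t); auto.
  apply mu_nonneg; auto. Qed.

Lemma cdf_range mu x : is_prob_measure mu -> 0 <= cdf mu x <= 1.
Proof. intro Hm. unfold cdf. split; [apply mu_nonneg|apply mu_le1]; auto; apply borel_le. Qed.

Lemma levy_e mu m4 t e : is_prob_measure mu ->
  nonneg_integral mu (fun x => Rmax (x^4) 0) m4 -> nonneg_integral mu (fun x => Rmax (x^2) 0) 1 ->
  nonneg_integral mu (fun x => Rmax (x^1) 0) t -> nonneg_integral mu (fun x => Rmax (- (x^1)) 0) t ->
  0 < e -> 0 <= m4 - 1 -> 343 * (m4 - 1) <= 8 * e^3 -> levy_ok (cdf mu) bern_cdf e.
Proof. intros Hm I4 I2 Ip In He Hs Hs3.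
  assert (Hb : forall x, 0 <= bern_cdf x <= 1) by (intro x; unfold bern_cdf; repeat destruct Rlt_dec; lra).
  split; [lra|]. intro x.
  destruct (Rlt_or_le e 1) as [He1|He1].
  2:{ pose proof (cdf_range mu (x - e) Hm). pose proof (cdf_range mu (x + e) Hm). pose proof (Hb x). lra. }
  assert (Qp : 1/2 - e <= mu (fun y => 1 - e <= 1 * y)).
  { apply (Q_bound mu m4 (fun x => Rmax (x^1) 0) (fun x => Rmax (- (x^1)) 0) t 1 e); auto; try lra.
    intro y; f_equal; simpl; ring. intro y; f_equal; simpl; ring. }
  assert (Qm : 1/2 - e <= mu (fun y => 1 - e <= -1 * y)).
  { apply (Q_bound mu m4 (fun x => Rmax (- (x^1)) 0) (fun x => Rmax (x^1) 0) t (-1) e); auto; try lra.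
    intro y; f_equal; simpl; ring. intro y; f_equal; simpl; ring. }
  assert (T1 : mu (fun y => 1 + e < y) <= e).
  { assert (4 * e^2 * mu (fun y => 1 + e < y) <= m4 - 1).
    { apply tail_bound; auto. apply borel_gt. intros y Hy. assert (y^2 - 1 >= 2 * e) by nra. nra. }
    assert (0 < e^2) by nra. apply Rmult_le_reg_l with (4 * e^2); nra. }
  assert (T2 : mu (fun y => y <= - 1 - e) <= e).
  { assert (4 * e^2 * mu (fun y => y <= - 1 - e) <= m4 - 1).
    { apply tail_bound; auto. apply borel_le. intros y Hy. assert (y^2 - 1 >= 2 * e) by nra. nra. }
    assert (0 < e^2) by nra. apply Rmult_le_reg_l with (4 * e^2); nra. }
  assert (Hmono : forall a b, a <= b -> cdf mu a <= cdf mu b).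
  { intros a b Hab. unfold cdf. apply mu_mono; auto using borel_le. intros y Hy; lra. }
  pose proof (cdf_range mu (x - e) Hm). pose proof (cdf_range mu (x + e) Hm).
  unfold bern_cdf. destruct (Rlt_dec x (-1)) as [H1|H1]; [|destruct (Rlt_dec x 1) as [H2|H2]].
  - split; [|lra].
    assert (cdf mu (x - e) <= mu (fun y => y <= - 1 - e)).
    { unfold cdf. apply mu_mono; auto using borel_le. intros y Hy; lra. }
    lra.
  - split.
    + assert (HC : cdf mu (x - e) <= mu (fun y => ~ (1 - e <= 1 * y))).
      { unfold cdf. apply mu_mono; auto using borel_le. apply borel_not, borel_ge_sg; ring.
        intros y Hy; lra. }
      rewrite (mu_compl mu (fun y => 1 - e <= 1 * y) Hm (borel_ge_sg (1 - e) 1 ltac:(ring))) in HC. lra.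
    + assert (mu (fun y => 1 - e <= -1 * y) <= cdf mu (x + e)).
      { unfold cdf. apply mu_mono; auto using borel_le. apply borel_ge_sg; ring. intros y Hy; lra. }
      lra.
  - split; [lra|].
    assert (HC : mu (fun y => ~ (1 + e < y)) <= cdf mu (x + e)).
    { unfold cdf. apply mu_mono; auto using borel_le. apply borel_not, borel_gt. intros y Hy; lra. }
    rewrite (mu_compl mu (fun y => 1 + e < y) Hm (borel_gt _)) in HC. lra.
Qed.

Theorem mainTheorem4 (mu : (R -> Prop) -> R) :
  is_prob_measure mu ->
  has_moment mu 1 0 ->
  has_moment mu 2 1 ->
  forall m4 : R, has_moment mu 4 m4 ->
  forall L : R, levy_dist (cdf mu) bern_cdf L ->
  forall r : R, 0 <= r -> r ^ 3 = m4 - 1 ->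
  L <= 7 / 2 * r.
Proof.
  intros Hm [p1 [q1 [Ip1 [Iq1 E1]]]] [p2 [q2 [Ip2 [Iq2 E2]]]] m4 [p4 [q4 [Ip4 [Iq4 E4]]]]
    L [HL _] r Hr Hr3.
  assert (q2 = 0). { apply (int_zero mu _ q2 Hm Iq2). intro x. apply Rmax_right. destruct (pow24 x); lra. }
  assert (q4 = 0). { apply (int_zero mu _ q4 Hm Iq4). intro x. apply Rmax_right. destruct (pow24 x); lra. }
  assert (p2 = 1) by lra. assert (p4 = m4) by lra. subst p2 p4.
  assert (q1 = p1) by lra. subst q1.
  assert (Hs : 0 <= m4 - 1) by (rewrite <- Hr3; apply pow_le; auto).
  assert (Hall : forall e, 7/2 * r < e -> L <= e).
  { intros e He. apply HL. apply (levy_e mu m4 p1 e); auto; try lra.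
    rewrite <- Hr3. assert (r^3 <= (2 * e / 7)^3) by (apply pow_incr; lra).
    replace (8 * e^3) with (343 * (2 * e / 7)^3) by field. lra. }
  apply Rnot_lt_le. intro Hlt. specialize (Hall ((L + 7/2*r)/2) ltac:(lra)). lra.
Qed.
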